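(* Let $\mathcal I$ be an ideal on $\mathbb N$ with the Baire property, and let $\sum_n x_n$ be a series in a Banach space $X$. Then $\sum_n x_n$ is unconditionally convergent if and only if the set $$A(\mathcal I,(x_n)):=\left\{t \in \{0,1\}^{\mathbb N} \colon \sum_n t(n)x_n \text{ is } \mathcal I\text{-convergent}\right\}$$ is nonmeager in $\{0,1\}^{\mathbb N}$.
   Context: $\mathbb N=\{1,2,\dots\}$. An ideal on $\mathbb N$ is a family $\mathcal I\subset\mathcal P(\mathbb N)$ closed under finite unions and subsets, with $\mathbb N\notin\mathcal I$ and containing all finite subsets of $\mathbb N$. Identifying subsets of $\mathbb N$ with their characteristic functions, $\mathcal I$ is regarded as a subset of the Cantor space $\{0,1\}^{\mathbb N}$ (product topology), and ''$\mathcal I$ has the Baire property'' refers to this subset. A sequence $(y_n)$ in a normed space is $\mathcal I$-convergent to $y$ if $\{n:\|y_n-y\|>\varepsilon\}\in\mathcal I$ for every $\varepsilon>0$; a series is $\mathcal I$-convergent if its sequence of partial sums is $\mathcal I$-convergent to some element. A series $\sum_n x_n$ is unconditionally convergent if $\sum_n x_{p(n)}$ converges for every permutation $p$ of $\mathbb N$. Banach spaces are over $\mathbb R$. *)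

(* Defs.v *)
From HB Require Import structures.
From mathcomp Require Import all_boot all_order all_algebra.
From mathcomp Require Import all_classical all_reals all_analysis.
From mathcomp Require Import Rstruct Rstruct_topology.
From Stdlib Require Import Rdefinitions.
Import Order.TTheory GRing.Theory Num.Theory.
Import numFieldNormedType.Exports.

Set Implicit Arguments.
Unset Strict Implicit.
Unset Printing Implicit Defensive.

Local Open Scope classical_set_scope.
Local Open Scope ring_scope.

(* An ideal on the index set (indices are shifted: library index n stands
   for the paper's n+1). *)
Definition is_ideal (I : set (set nat)) : Prop :=
  [/\ (forall A B, I A -> I B -> I (A `|` B)),
      (forall A B, B `<=` A -> I A -> I B),
      ~ I setT &
      (forall A, finite_set A -> I A)].

Definition nowhere_dense (T : topologicalType) (A : set T) : Prop :=
  interior (closure A) = set0.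

Definition meager (T : topologicalType) (A : set T) : Prop :=
  exists F : nat -> set T,
    (forall n, nowhere_dense (F n)) /\ A `<=` \bigcup_n F n.

Definition baire_property (T : topologicalType) (A : set T) : Prop :=
  exists U : set T, open U /\ meager ((A `\` U) `|` (U `\` A)).

Definition ideal_in_cantor (I : set (set nat)) : set cantor_space :=
  [set t | I [set n | t n]].

Definition Iconverges_to (K : numDomainType) (V : normedModType K)
    (I : set (set nat)) (y : nat -> V) (l : V) : Prop :=
  forall eps : K, 0 < eps -> I [set n | eps < `|y n - l|].

Definition Iconvergent (K : numDomainType) (V : normedModType K)
    (I : set (set nat)) (y : nat -> V) : Prop :=
  exists l : V, Iconverges_to I y l.

Definition series_Iconvergent (K : numDomainType) (V : normedModType K)
    (I : set (set nat)) (x : nat -> V) : Prop :=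
  Iconvergent I (series x).

Definition unconditionally_convergent (K : numDomainType) (V : normedModType K)
    (x : nat -> V) : Prop :=
  forall p : nat -> nat, bijective p -> cvg (series (fun n => x (p n)) @ \oo).

Definition A_set (V : normedModType R) (I : set (set nat)) (x : nat -> V)
    : set cantor_space :=
  [set t : cantor_space |
     series_Iconvergent I (fun n => ((t n : nat)%:R : R) *: x n)].

(* Main.v *)
Require Import Defs.
From HB Require Import structures.
From mathcomp Require Import all_boot all_order all_algebra.
From mathcomp Require Import all_classical all_reals all_analysis.
From mathcomp Require Import Rstruct Rstruct_topology.
From Stdlib Require Import Rdefinitions.
From mathcomp Require Import lra.
Import Order.TTheory GRing.Theory Num.Theory.
Import numFieldNormedType.Exports.
Set Implicit Arguments.
Unset Strict Implicit.
Unset Printing Implicit Defensive.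
Local Open Scope classical_set_scope.
Local Open Scope ring_scope.
Definition cyl (g : nat -> bool) (N : nat) : set cantor_space :=
  [set s | forall i, (i < N)%nat -> s i = g i].

Lemma cyl_open g N : open (cyl g N).
Proof.
elim: N => [|N IH].
  have -> : cyl g 0 = setT by rewrite eqEsubset; split => s.
  exact: openT.
have -> : cyl g N.+1 = cyl g N `&` (@proj nat (fun _ => bool) N) @^-1` [set g N].
  rewrite eqEsubset; split => s /=.
    by move=> H; split; [move=> i iN; apply: H; apply: ltnW | apply: H].
  move=> [H1 H2] i; rewrite ltnS leq_eqVlt => /orP[/eqP -> //|]; exact: H1.
apply: openI => //.
have pc : continuous (fun s : cantor_space => s N).
  move=> s; exact: (@proj_continuous nat (fun _ => bool) N s).
exact: (proj1 (continuousP _) pc [set g N] (discrete_open _)).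
Qed.

Lemma nbhs_cyl (t : cantor_space) (U : set cantor_space) :
  nbhs t U -> exists N, cyl t N `<=` U.
Proof.
move=> Ut; apply: contrapT => H.
have H' : forall N, exists s, cyl t N s /\ ~ U s.
  move=> N; apply: contrapT => nE; apply: H; exists N => s cs.
  by apply: contrapT => nU; apply: nE; exists s.
have [f Hf] := choice H'.
have fcvg : f @ \oo --> t.
  apply/cvg_sup => i V [W] [[Z] oZ <-] WfN WV.
  apply: (filterS WV); rewrite nbhs_simpl; exists i.+1 => // n /= ni.
  by rewrite /= (proj1 (Hf n)).
have := fcvg U Ut; rewrite nbhs_simpl => -[N _ HN].
by apply: (proj2 (Hf N)); apply: HN => /=.
Qed.

Lemma cyl_self g N : cyl g N g.
Proof. by []. Qed.

Lemma cyl_sub h M g N : (N <= M)%nat -> (forall i, (i < N)%nat -> h i = g i) ->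
  cyl h M `<=` cyl g N.
Proof.
move=> NM hg s hs i iN; rewrite hs ?hg //; exact: leq_trans iN NM.
Qed.

Definition CND (D : set cantor_space) := forall g N, exists h M,
  [/\ (N <= M)%nat, (forall i, (i < N)%nat -> h i = g i) &
      (forall s, cyl h M s -> ~ D s)].

Lemma nd_CND D : nowhere_dense D -> CND D.
Proof.
rewrite /nowhere_dense => nd g N.
have [h [hc hD]] : exists h, cyl g N h /\ ~ closure D h.
  apply: contrapT => nE.
  have : interior (closure D) g.
    apply: (@filterS _ _ _ (cyl g N)).
      move=> s cs; apply: contrapT => ncs; apply: nE; exists s; by split.
    by apply: open_nbhs_nbhs; split; [exact: cyl_open|exact: cyl_self].
  by rewrite nd.
have [B [Bh DB]] : exists B, nbhs h B /\ ~ (D `&` B !=set0).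
  apply: contrapT => nE; apply: hD => B Bh; apply: contrapT => nDB.
  by apply: nE; exists B.
have [M' HM'] := nbhs_cyl Bh.
exists h, (maxn M' N); split => //; first exact: leq_maxr.
move=> s cs Ds; apply: DB; exists s; split => //; apply: HM'.
by apply: cyl_sub cs => //; exact: leq_maxl.
Qed.

Lemma CND_nd D : CND D -> nowhere_dense D.
Proof.
move=> cD; rewrite /nowhere_dense eqEsubset; split => // p Hp.
have [N HN] := nbhs_cyl Hp.
have [h [M [NM hg hD]]] := cD p N.
have : closure D h by apply: HN => i iN; rewrite hg.
move=> /(_ (cyl h M)) [].
  by apply: open_nbhs_nbhs; split; [exact: cyl_open|exact: cyl_self].
by move=> s [Ds cs]; apply: (hD s cs).
Qed.

Definition meagerC (A : set cantor_space) :=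
  exists F : nat -> set cantor_space, (forall n, CND (F n)) /\ A `<=` \bigcup_n F n.

Lemma meagerE A : meager A <-> meagerC A.
Proof.
split=> -[F [HF AF]]; exists F; split => // n.
  exact: nd_CND.
exact: CND_nd.
Qed.

Lemma meagerC_sub A B : A `<=` B -> meagerC B -> meagerC A.
Proof. by move=> AB [F [HF BF]]; exists F; split => //; apply: subset_trans BF. Qed.

Lemma meagerC_U A B : meagerC A -> meagerC B -> meagerC (A `|` B).
Proof.
move=> [F [HF AF]] [G [HG BG]].
exists (fun n => if odd n then F n./2 else G n./2); split.
  by move=> n; case: (odd n).
move=> s [/AF [n _ Fn]|/BG [n _ Gn]].
  by exists n.*2.+1 => //=; rewrite odd_double /= uphalf_double.
by exists n.*2 => //=; rewrite odd_double half_double.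
Qed.

Lemma baireC g N (F : nat -> set cantor_space) : (forall j, CND (F j)) ->
  exists t, cyl g N t /\ forall j, ~ F j t.
Proof.
move=> HF.
have : forall jp : nat * ((nat -> bool) * nat), exists q : (nat -> bool) * nat,
   [/\ (jp.2.2 < q.2)%nat, (forall i, (i < jp.2.2)%nat -> q.1 i = jp.2.1 i) &
      (forall s, cyl q.1 q.2 s -> ~ F jp.1 s)].
  move=> [j [h M]] /=; have [h' [M' [MM' hh' hF]]] := HF j h M.
  exists (h', M'.+1) => /=; split => //.
  by move=> s cs; apply: hF; apply: cyl_sub cs => //.
move=> /choice [step Hstep].
pose st := fix st j := if j is j'.+1 then step (j', st j') else (g, N).
have st_incr j : (N + j <= (st j).2)%nat.
  elim: j => [|j IH] /=; first by rewrite addn0.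
  have [+ _ _] := Hstep (j, st j); rewrite addnS /=; exact: leq_ltn_trans.
have st_agree j k : (j <= k)%nat -> forall i, (i < (st j).2)%nat -> (st k).1 i = (st j).1 i.
  elim: k => [|k IH]; first by rewrite leqn0 => /eqP ->.
  rewrite leq_eqVlt => /orP[/eqP -> //|]; rewrite ltnS => jk i ij.
  have [stk1 stk2 _] := Hstep (k, st k); rewrite /= stk2 ?IH //.
  have := st_incr k; have := (fun x => @leq_trans _ _ _ x stk1).
  by move=> _ _; apply: leq_trans ij (_ : (st j).2 <= (st k).2)%nat; 
    elim: k jk {IH stk1 stk2} => [|k IHk]; [rewrite leqn0 => /eqP ->|
    rewrite leq_eqVlt => /orP[/eqP -> //|]; rewrite ltnS => /IHk h;
    apply: leq_trans h _; have [+ _ _] := Hstep (k, st k); exact: ltnW].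
pose t i := (st i.+1).1 i.
have tcyl j : cyl (st j).1 (st j).2 t.
  move=> i ij; rewrite /t; case: (leqP j i.+1) => ji.
    by rewrite (st_agree j i.+1).
  rewrite (st_agree i.+1 j) ?(ltnW ji) //.
  by have := st_incr i.+1; apply: leq_trans; rewrite addnS ltnS leq_addl.
exists t; split; first exact: (tcyl 0%nat).
move=> j Fj; have [_ _ H] := Hstep (j, st j); apply: (H t) => //.
exact: (tcyl j.+1).
Qed.

Definition psi (N : nat) (s : cantor_space) : cantor_space :=
  fun i => if (i < N)%nat then s i else ~~ s i.

Lemma psiK N s : psi N (psi N s) = s.
Proof.
apply: functional_extensionality_dep => i; rewrite /psi.
by case: ifP => h; rewrite h // negbK.
Qed.

Lemma cyl_psi N g M s : cyl (psi N g) M (psi N s) <-> cyl g M s.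
Proof.
split => H i iM; have := H i iM; rewrite /psi; case: ifP => // _.
  by move/negb_inj.
by move=> ->.
Qed.

Lemma CND_psi N D : CND D -> CND (psi N @^-1` D).
Proof.
move=> cD g M; have [h [M' [MM' hg hD]]] := cD (psi N g) M.
exists (psi N h), M'; split => //.
  move=> i iM; rewrite /psi; have := hg i iM; rewrite /psi.
  by case: ifP => // _ ->; rewrite negbK.
move=> s cs; apply: hD; rewrite -(psiK N h); exact/cyl_psi.
Qed.

Lemma meagerC_psi N A : meagerC A -> meagerC (psi N @^-1` A).
Proof.
move=> [F [HF AF]]; exists (fun n => psi N @^-1` F n); split.
  by move=> n; apply: CND_psi.
by move=> s /AF [n _ Fn]; exists n.
Qed.

Lemma cyl_not_meager g N : ~ meagerC (cyl g N).
Proof.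
move=> [F [HF cF]]; have [t [ct Ft]] := baireC g N HF.
by have [n _ Fn] := cF t ct; apply: (Ft n).
Qed.

Lemma ideal_meager I : is_ideal I -> baire_property (ideal_in_cantor I) ->
  meagerC (ideal_in_cantor I).
Proof.
move=> [IU IS IT IF] [U [oU /meagerE mU]].
set B := ideal_in_cantor I.
have [[u Uu]|nU] := pselect (exists u, U u); last first.
  apply: meagerC_sub mU => s Bs; left; split => // Us; apply: nU; by exists s.
exfalso.
have [N HN] : exists N, cyl u N `<=` U.
  by apply: nbhs_cyl; apply: open_nbhs_nbhs; split.
have mY : meagerC (cyl u N `\` B).
  by apply: meagerC_sub mU => s [cs nB]; right; split => //; apply: HN.
apply: (@cyl_not_meager u N).
have mY' := meagerC_psi N mY.
apply: meagerC_sub (meagerC_U mY mY') => s cs.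
have [Bs|nBs] := pselect (B s); last by left.
have [Bps|nBps] := pselect (B (psi N s)); last first.
  right; split => //= i iN; rewrite /psi iN; exact: cs.
exfalso; apply: IT.
have -> : setT = ([set n | s n] `|` [set n | psi N s n]) `|` `I_N.
  rewrite eqEsubset; split => // n _.
  case: (ltnP n N) => nN; first by right.
  left; rewrite /psi /= ltnNge nN /=; by case: (s n); [left|right].
apply: (IU); [apply: (IU); [exact: Bs|exact: Bps] | exact: IF (finite_II N)].
Qed.

Lemma CND_sub A B : A `<=` B -> CND B -> CND A.
Proof.
move=> AB cB g N; have [h [M [NM hg hB]]] := cB g N.
by exists h, M; split => // s cs As; apply: (hB s cs); apply: AB.
Qed.

Lemma CND_U A B : CND A -> CND B -> CND (A `|` B).
Proof.
move=> cA cB g N; have [h [M [NM hg hA]]] := cA g N.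
have [h' [M' [MM' hh' hB]]] := cB h M.
exists h', M'; split; first exact: leq_trans MM'.
  by move=> i iN; rewrite hh' ?hg // (leq_trans iN NM).
move=> s cs [As|Bs]; last exact: (hB s cs).
by apply: (hA s) => //; apply: cyl_sub cs.
Qed.

Lemma CND_bigU (F : nat -> set cantor_space) k : (forall j, CND (F j)) ->
  CND [set s | exists2 j, (j <= k)%nat & F j s].
Proof.
move=> HF; elim: k => [|k IH].
  by apply: CND_sub (HF 0%nat) => s [j]; rewrite leqn0 => /eqP ->.
apply: CND_sub (CND_U IH (HF k.+1)) => s [j].
rewrite leq_eqVlt => /orP[/eqP -> Fs|jk Fs]; first by right.
by left; exists j.
Qed.

Lemma avoid_list D (L : seq (seq bool)) n : CND D -> exists tau M,
  (n < M)%nat /\ forall sg, sg \in L -> forall s : cantor_space,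
   (forall i, (i < n)%nat -> s i = nth false sg i) ->
   (forall i, (n <= i < M)%nat -> s i = tau i) -> ~ D s.
Proof.
move=> cD; elim: L => [|sg L [tau [M [nM IH]]]].
  by exists (fun _ => false), n.+1; split => // sg; rewrite in_nil.
pose g i := if (i < n)%nat then nth false sg i else tau i.
have [h [M' [MM' hg hD]]] := cD g M.
exists h, M'; split; first exact: leq_trans MM'.
move=> sg'; rewrite in_cons => /orP[/eqP ->|sgL] s s1 s2.
  apply: hD => i iM'; case: (ltnP i n) => iN; last by rewrite s2 ?iN.
  by rewrite s1 // hg /g ?iN // (leq_trans iN (ltnW nM)).
apply: (IH sg' sgL s s1) => i /andP[ni iM].
by rewrite s2 ?ni ?(leq_trans iM MM') // hg // /g ltnNge ni.
Qed.

Lemma avoid_all D n : CND D -> exists tau M,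
  (n < M)%nat /\ forall s : cantor_space,
   (forall i, (n <= i < M)%nat -> s i = tau i) -> ~ D s.
Proof.
move=> cD; have [tau [M [nM H]]] := avoid_list (map val (enum {: n.-tuple bool})) n cD.
exists tau, M; split => // s sM.
have sz : size (mkseq s n) == n by rewrite size_mkseq.
apply: (H (mkseq s n)) => //.
  by apply/mapP; exists (Tuple sz) => //; rewrite mem_enum.
by move=> i iN; rewrite nth_mkseq.
Qed.

Lemma incr_le (n : nat -> nat) : (forall k, (n k < n k.+1)%nat) ->
  forall a b, (a <= b)%nat -> (n a <= n b)%nat.
Proof.
move=> hn a; elim => [|b IH]; first by rewrite leqn0 => /eqP ->.
rewrite leq_eqVlt => /orP[/eqP -> //|]; rewrite ltnS => ab.
exact: leq_trans (IH ab) (ltnW (hn b)).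
Qed.

Lemma block_uniq (n : nat -> nat) : (forall k, (n k < n k.+1)%nat) ->
  forall k k' i, (n k <= i < n k.+1)%nat -> (n k' <= i < n k'.+1)%nat -> k = k'.
Proof.
move=> hn k k' i /andP[a1 a2] /andP[b1 b2].
case: (ltngtP k k') => // kk'.
  have := incr_le hn kk'; move=> h; have := leq_trans h b1.
  by rewrite leqNgt a2.
have := incr_le hn kk'; move=> h; have := leq_trans h a1.
by rewrite leqNgt b2.
Qed.

Lemma talagrand I : is_ideal I -> meagerC (ideal_in_cantor I) ->
  exists n : nat -> nat, (forall k, (n k < n k.+1)%nat) /\
    forall S, I S -> exists j, forall k, (j <= k)%nat ->
      exists i, (n k <= i < n k.+1)%nat /\ ~ S i.
Proof.
move=> [IU IS IT IF] [F [HF BF]].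
have : forall kn : nat * nat, exists q : (nat -> bool) * nat,
  (kn.2 < q.2)%nat /\ forall s : cantor_space,
   (forall i, (kn.2 <= i < q.2)%nat -> s i = q.1 i) ->
   ~ [set s | exists2 j, (j <= kn.1)%nat & F j s] s.
  move=> [k m]; have [tau [M [nM H]]] := avoid_all m (CND_bigU k HF).
  by exists (tau, M).
move=> /choice [nxt Hnxt].
pose n := fix n k := if k is k'.+1 then (nxt (k', n k')).2 else 0%nat.
have hn k : (n k < n k.+1)%nat by exact: (proj1 (Hnxt (k, n k))).
exists n; split => // S IS'.
apply: contrapT => nj.
have inf j : exists2 k, (j <= k)%nat & forall i, (n k <= i < n k.+1)%nat -> S i.
  apply: contrapT => nk; apply: nj; exists j => k jk.
  apply: contrapT => ni; apply: nk; exists k => // i ik.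
  by apply: contrapT => nS; apply: ni; exists i.
pose S' := [set i | S i /\ forall k, (n k <= i < n k.+1)%nat ->
   (forall i', (n k <= i' < n k.+1)%nat -> S i') -> (nxt (k, n k)).1 i].
pose t : cantor_space := fun i => `[< S' i >].
have Bt : ideal_in_cantor I t.
  rewrite /ideal_in_cantor /=.
  have -> : [set i | t i] = S'.
    by rewrite eqEsubset; split => i /=; rewrite /t => /asboolP.
  by apply: (IS S) => // i [].
have [j _ Fj] := BF t Bt.
have [k jk Sk] := inf j.
apply: (proj2 (Hnxt (k, n k)) t); last by exists j.
move=> i /= ik; rewrite /t; apply/idP/idP.
  by move/asboolP => [_ H]; apply: H.
move=> hi; apply/asboolP; split; first by apply: Sk.
by move=> k' ik' _; rewrite -(block_uniq hn ik ik').
Qed.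

Section Series.
Variable V : normedModType R.

Definition tx (t : nat -> bool) (x : nat -> V) n : V := ((t n : nat)%:R : R) *: x n.

Lemma tx_false t x i : t i = false -> tx t x i = 0.
Proof. by rewrite /tx => ->; rewrite scale0r. Qed.

Lemma sum_zero t x a b : (forall i, (a <= i < b)%nat -> t i = false) ->
  \sum_(a <= i < b) tx t x i = 0.
Proof.
move=> H; rewrite big_nat_cond big1 // => i /andP[hi _]; exact: tx_false (H i hi).
Qed.

Lemma series_flat t x m m' : (forall i, (m <= i < m')%nat -> t i = false) ->
  forall p, (m <= p <= m')%nat -> series (tx t x) p = series (tx t x) m.
Proof.
move=> H p /andP[mp pm]; apply/eqP; rewrite -subr_eq0; apply/eqP.
rewrite sub_series_geq // sum_zero // => i /andP[h1 h2]; apply: H.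
by rewrite h1 (leq_trans h2 pm).
Qed.

Lemma sum_ext t s x a b : (forall i, (a <= i < b)%nat -> t i = s i) ->
  \sum_(a <= i < b) tx t x i = \sum_(a <= i < b) tx s x i.
Proof.
by move=> H; rewrite big_nat_cond [RHS]big_nat_cond; apply: eq_bigr => i /andP[hi _];
  rewrite /tx H.
Qed.

End Series.

Definition NC (V : normedModType R) (x : nat -> V) (eps : R) :=
  forall N, exists t a b, (N <= a)%nat /\ eps <= `|\sum_(a <= i < b) tx t x i|.

Lemma incr_ge (n : nat -> nat) : (forall k, (n k < n k.+1)%nat) -> forall k, (k <= n k)%nat.
Proof. by move=> hn; elim => // k IH; apply: leq_ltn_trans IH (hn k). Qed.

Lemma A_meager (V : normedModType R) I (x : nat -> V) eps :
  is_ideal I -> meagerC (ideal_in_cantor I) -> 0 < eps -> NC x eps ->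
  meagerC (A_set I x).
Proof.
move=> II mI epos nc.
have [n [hn tal]] := talagrand II mI.
pose W j := [set t : cantor_space | exists k k', [/\ (j <= k)%nat, (k < k')%nat,
   (forall i, (n k <= i < n k.+1)%nat -> t i = false),
   (forall i, (n k' <= i < n k'.+1)%nat -> t i = false) &
   eps <= `|\sum_(n k.+1 <= i < n k') tx t x i| ] ].
exists (fun j => ~` W j); split.
  move=> j g N.
  pose k := maxn j N.
  have [t0 [a [b [ka Hab]]]] := nc (n k.+1).
  have ab : (a <= b)%nat.
    case: (leqP a b) => // ba; move: Hab; rewrite big_geq ?(ltnW ba) // normr0.
    by rewrite leNgt epos.
  pose k' := maxn b k.+1.
  pose h i := if (i < N)%nat then g i else if (a <= i < b)%nat then t0 i else false.
  have Nk : (N <= n k)%nat by apply: leq_trans (incr_ge hn k); exact: leq_maxr.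
  have bk' : (b <= n k')%nat by apply: leq_trans (incr_ge hn k'); exact: leq_maxl.
  have kk' : (k < k')%nat by rewrite /k' leq_maxr.
  have k1k' : (n k.+1 <= n k')%nat by apply: incr_le.
  exists h, (n k'.+1); split.
  - apply: leq_trans Nk _; apply: incr_le => //; exact: leq_trans (ltnW kk') _.
  - by move=> i iN; rewrite /h iN.
  move=> s cs; apply; exists k, k'; split => //.
  - exact: leq_maxl.
  - move=> i /andP[i1 i2]; rewrite cs; last first.
      apply: leq_trans i2 _; apply: incr_le => //; by rewrite ltnS ltnW.
    rewrite /h ltnNge (leq_trans Nk i1) /=.
    by rewrite leqNgt (leq_trans i2 ka).
  - move=> i /andP[i1 i2]; rewrite cs // /h.
    have bi : (b <= i)%nat by exact: leq_trans bk' i1.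
    have Ni : (N <= i)%nat.
      apply: leq_trans bi; apply: leq_trans ab; apply: leq_trans ka.
      by apply: leq_trans Nk (ltnW (hn k)).
    by rewrite ltnNge Ni /= ltnNge bi andbF.
  have Nk1 : (N <= n k.+1)%nat by exact: leq_trans Nk (ltnW (hn k)).
  rewrite (big_cat_nat ka (leq_trans ab bk')) /=.
  rewrite (big_cat_nat ab bk') /=.
  rewrite (@sum_zero _ s x (n k.+1) a); last first.
    move=> i /andP[i1 i2]; rewrite cs; last first.
      apply: leq_trans i2 (leq_trans ab (leq_trans bk' _)).
      exact: ltnW (hn k').
    by rewrite /h ltnNge (leq_trans Nk1 i1) /= leqNgt i2.
  rewrite (@sum_zero _ s x b (n k')); last first.
    move=> i /andP[i1 i2]; rewrite cs; last exact: ltn_trans i2 (hn k').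
    rewrite /h ltnNge (leq_trans Nk1 (leq_trans ka (leq_trans ab i1))) /=.
    by rewrite ltnNge i1 andbF.
  rewrite add0r addr0 (@sum_ext _ s t0) // => i /andP[i1 i2].
  rewrite cs; last first.
    apply: leq_trans i2 (leq_trans bk' _); exact: ltnW (hn k').
  by rewrite /h ltnNge (leq_trans Nk1 (leq_trans ka i1)) /= i1 i2.
move=> t At; apply: contrapT => nW.
have Wt j : W j t.
  by apply: contrapT => nWj; apply: nW; exists j.
have [l Hl] := At.
have e3 : 0 < eps / 3 by rewrite divr_gt0.
have IE := Hl _ e3.
have [j0 Hj0] := tal _ IE.
have [k [k' [j0k kk' z1 z2 big]]] := Wt j0.
set u := tx t x.
have c1 m : (n k <= m < n k.+1)%nat -> series u m = series u (n k.+1).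
  move=> /andP[m1 m2]; rewrite (@series_flat _ t x (n k) (n k.+1) z1 m).
    by rewrite (@series_flat _ t x (n k) (n k.+1) z1 (n k.+1)) // ltnW ?(hn k) // leqnn.
  by rewrite m1 ltnW.
have c2 m : (n k' <= m < n k'.+1)%nat -> series u m = series u (n k').
  move=> /andP[m1 m2]; rewrite (@series_flat _ t x (n k') (n k'.+1) z2 m) //.
  by rewrite m1 ltnW.
have diff : series u (n k') - series u (n k.+1) = \sum_(n k.+1 <= i < n k') u i.
  by rewrite sub_series_geq // incr_le.
have [Hc|Hc] := leP `|series u (n k.+1) - l| (eps / 3); last first.
  have [i [/c1 ci nE]] := Hj0 k j0k; apply: nE => /=; by rewrite ci.
have [Hc'|Hc'] := leP `|series u (n k') - l| (eps / 3); last first.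
  have [i [/c2 ci nE]] := Hj0 k' (leq_trans j0k (ltnW kk')); apply: nE => /=; by rewrite ci.
move: big; rewrite -/u -diff.
have : `|series u (n k') - series u (n k.+1)| <= eps / 3 + eps / 3.
  rewrite (_ : series u (n k') - series u (n k.+1) =
     (series u (n k') - l) - (series u (n k.+1) - l)); last first.
    by rewrite opprB addrA subrK.
  apply: le_trans (ler_normB _ _) _; exact: lerD.
move=> h1 h2; have := le_trans h2 h1; lra.
Qed.

Definition CC (V : normedModType R) (x : nat -> V) :=
  forall eps : R, 0 < eps -> exists N, forall t a b, (N <= a)%nat ->
    `|\sum_(a <= i < b) tx t x i| < eps.

Lemma notCC_NC (V : normedModType R) (x : nat -> V) :
  ~ CC x -> exists eps, 0 < eps /\ NC x eps.
Proof.
move=> nc; apply: contrapT => nE; apply: nc => eps epos.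
apply: contrapT => nN; apply: nE; exists eps; split => // N.
apply: contrapT => nt; apply: nN; exists N => t a b Na.
rewrite ltNge; apply/negP => h; apply: nt; by exists t, a, b.
Qed.

Lemma CC_cvg (X : completeNormedModType R) (x : nat -> X) t :
  CC x -> cvg (series (tx t x) @ \oo).
Proof.
move=> cc; apply/cauchy_cvgP/cauchy_seriesP => e e0.
have [N HN] := cc e e0.
exists ([set m | (N <= m)%nat], [set m | (N <= m)%nat]) => /=.
  by split; exists N.
by move=> [a b] /= [aN _]; apply: HN.
Qed.

Lemma CC_A (X : completeNormedModType R) I (x : nat -> X) :
  is_ideal I -> CC x -> A_set I x = setT.
Proof.
move=> [IU IS IT IF] cc; rewrite eqEsubset; split => // t _.
have cv := CC_cvg (t:=t) cc.
exists (lim (series (tx t x) @ \oo)) => eps e0.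
have := proj1 (cvgrPdist_lt _ _) cv eps e0.
move=> [N _ HN]; apply: (IS `I_N); last exact: IF (finite_II N).
move=> n /= en; case: (ltnP n N) => // Nn.
have := HN n Nn; rewrite distrC => h.
by move: en; rewrite ltNge (ltW h).
Qed.

Lemma bound_fun (f : nat -> nat) N : exists M, forall i, (i < N)%nat -> (f i < M)%nat.
Proof.
elim: N => [|N [M HM]]; first by exists 0%nat.
exists (maxn M (f N).+1) => i; rewrite ltnS leq_eqVlt => /orP[/eqP ->|iN].
  exact: leq_maxr.
exact: leq_trans (HM i iN) (leq_maxl _ _).
Qed.

Lemma CC_uncond (X : completeNormedModType R) (x : nat -> X) :
  CC x -> unconditionally_convergent x.
Proof.
move=> cc p [q pK qK].
apply/cauchy_cvgP/cauchy_seriesP => e e0.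
have [N HN] := cc e e0.
have [M HM] := bound_fun q N.
exists ([set m | (M <= m)%nat], [set m | (M <= m)%nat]) => /=.
  by split; exists M.
move=> [a b] /= [aM _].
case: (leqP b a) => ba.
  by rewrite big_geq // normr0.
have [K HK] := bound_fun p b.
pose S := map p (iota a (b - a)).
have pinj : injective p by exact: can_inj pK.
have uS : uniq S by rewrite map_inj_uniq // iota_uniq.
have Srange i : i \in S -> (N <= i < K)%nat.
  move=> /mapP [j]; rewrite mem_iota subnKC ?(ltnW ba) // => /andP[aj jb] ->.
  rewrite HK // andbT leqNgt; apply/negP => pjN.
  have := HM _ pjN; rewrite pK => jM.
  by move: (leq_trans aM aj); rewrite leqNgt jM.
have -> : \sum_(a <= k < b) x (p k) = \sum_(N <= i < K) tx (fun i => i \in S) x i.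
  have -> : \sum_(a <= k < b) x (p k) = \sum_(i <- S) x i.
    by rewrite big_map /index_iota.
  rewrite /index_iota.
  have -> : \sum_(i <- iota N (K - N)) tx (fun i : nat => i \in S) x i =
            \sum_(i <- iota N (K - N) | i \in S) x i.
    rewrite [RHS]big_mkcond; apply: eq_bigr => i _; rewrite /tx.
    by case: (i \in S); rewrite ?scale1r ?scale0r.
  rewrite -[RHS]big_filter; apply: perm_big; apply: uniq_perm => //.
    by rewrite filter_uniq // iota_uniq.
  move=> i; rewrite mem_filter mem_iota.
  case iS: (i \in S) => //=; have /andP[h1 h2] := Srange i iS.
  by rewrite h1 subnKC // (leq_trans h1 (ltnW h2)).
by apply: HN.
Qed.

Lemma glue (c : nat -> nat) (s : nat -> seq nat) : c 0%nat = 0%nat ->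
  (forall k, (c k < c k.+1)%nat) ->
  (forall k, perm_eq (s k) (iota (c k) (c k.+1 - c k))) ->
  exists p, bijective p /\ forall k i, (i < c k.+1 - c k)%nat ->
    p (c k + i)%nat = nth 0%nat (s k) i.
Proof.
move=> c0 hc hs.
have ex n : exists k, (c k <= n < c k.+1)%nat.
  elim: n => [|n [k /andP[k1 k2]]]; first by exists 0%nat; have := hc 0%nat; rewrite c0.
  case: (ltnP n.+1 (c k.+1)) => h.
    by exists k; rewrite h (leq_trans k1 (leqnSn n)).
  exists k.+1; have -> : n.+1 = c k.+1 by apply/eqP; rewrite eqn_leq h k2.
  by rewrite leqnn hc.
have [blk Hblk] := choice ex.
have blkE k n : (c k <= n < c k.+1)%nat -> blk n = k.
  by move=> h; apply: (block_uniq hc (Hblk n) h).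
have sz k : size (s k) = (c k.+1 - c k)%nat by rewrite (perm_size (hs k)) size_iota.
have us k : uniq (s k) by rewrite (perm_uniq (hs k)) iota_uniq.
have ms k m : (m \in s k) = (c k <= m < c k.+1)%nat.
  by rewrite (perm_mem (hs k)) mem_iota subnKC // ltnW.
pose p n := nth 0%nat (s (blk n)) (n - c (blk n)).
pose q n := (c (blk n) + index n (s (blk n)))%nat.
have pspec k i : (i < c k.+1 - c k)%nat -> p (c k + i)%nat = nth 0%nat (s k) i.
  move=> ik; have bk : blk (c k + i)%nat = k.
    by apply: blkE; rewrite leq_addr /= -ltn_subRL.
  by rewrite /p bk addKn.
exists p; split => //; exists q.
  move=> n; rewrite /p /q; set k := blk n.
  have /andP[k1 k2] := Hblk n.
  have dk : (n - c k < size (s k))%nat by rewrite sz ltn_sub2r.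
  have : nth 0%nat (s k) (n - c k) \in s k by exact: mem_nth.
  rewrite ms => /blkE ->; rewrite index_uniq //; exact: subnKC.
move=> n; rewrite /p /q; set k := blk n.
have /andP[k1 k2] := Hblk n.
have ns : n \in s k by rewrite ms k1 k2.
have ix : (index n (s k) < c k.+1 - c k)%nat by rewrite -sz index_mem.
rewrite (blkE k); last by rewrite leq_addr /= -ltn_subRL.
by rewrite addKn nth_index.
Qed.

Lemma sum_shift (X : zmodType) (f : nat -> X) m r :
  \sum_(m <= i < m + r) f i = \sum_(0 <= i < r) f (i + m)%nat.
Proof. by rewrite -{1}(add0n m) big_addn addKn. Qed.

Lemma NC_not_uncond (X : completeNormedModType R) (x : nat -> X) eps :
  0 < eps -> NC x eps -> ~ unconditionally_convergent x.
Proof.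
move=> epos nc uc.
have : forall m, exists tr : (nat -> bool) * nat * nat,
    [/\ (m < tr.1.2)%nat, (tr.1.2 <= tr.2)%nat &
        eps <= `|\sum_(tr.1.2 <= i < tr.2) tx tr.1.1 x i|].
  move=> m; have [t [a [b [ma Hab]]]] := nc m.+1.
  exists (t, a, b); split => //=.
  case: (leqP a b) => // ba; move: Hab; rewrite big_geq ?(ltnW ba) // normr0.
  by rewrite leNgt epos.
move=> /choice [fn Hfn].
pose c := fix c k := if k is k'.+1 then (fn (c k')).2 else 0%nat.
have hc k : (c k < c k.+1)%nat.
  by have [h1 h2 _] := Hfn (c k); exact: leq_trans h1 h2.
pose T k := (fn (c k)).1.1.
pose A k := (fn (c k)).1.2.
pose P k i := ((A k <= i)%nat && T k i).
pose L k := (c k.+1 - c k)%nat.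
pose s k := [seq i <- iota (c k) (L k) | P k i] ++ [seq i <- iota (c k) (L k) | predC (P k) i].
have hs k : perm_eq (s k) (iota (c k) (c k.+1 - c k)).
  by rewrite /s perm_filterC.
have [p [pb pspec]] := glue (c := c) (s := s) erefl hc hs.
have := uc p pb; move=> /cauchy_cvgP /cauchy_seriesP /(_ eps epos).
move=> [[A0 B0] /= [[N1 _ HA] [N2 _ HB]] HAB].
pose k := maxn N1 N2.
have ck : (k <= c k)%nat by apply: incr_ge.
set F := [seq i <- iota (c k) (L k) | P k i].
have rL : (size F <= L k)%nat by rewrite size_filter -{2}(size_iota (c k) (L k)) count_size.
have := HAB (c k, c k + size F)%nat; rewrite /=.
have h1 : A0 (c k) by apply: HA; apply: leq_trans ck; exact: leq_maxl.
have h2 : B0 (c k + size F)%nat.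
  by apply: HB; apply: leq_trans (leq_addr _ _); apply: leq_trans ck; exact: leq_maxr.
move=> /(_ (conj h1 h2)).
have -> : \sum_((c k) <= i < (c k + size F)%nat) x (p i) = \sum_(i <- F) x i.
  rewrite sum_shift [RHS](big_nth 0%nat) /=.
  apply: eq_big_nat => i /andP[_ iF].
  rewrite addnC pspec; last exact: leq_trans iF rL.
  by rewrite /s nth_cat iF.
have [hA1 hA2 big] := Hfn (c k).
rewrite /F big_filter -/(index_iota (c k) (c k.+1)) -/(A k) in hA1 hA2 big *.
rewrite big_mkcond (big_cat_nat (ltnW hA1) hA2) /=.
rewrite [X in X + _]big_nat_cond big1 ?add0r; last first.
  by move=> i /andP[/andP[_ iA] _]; rewrite /P leqNgt iA.
rewrite big_nat_cond (_ : \sum_(_ <= _ < _ | _) _ = \sum_(A k <= i < c k.+1) tx (T k) x i).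
  by rewrite ltNge big.
rewrite [RHS]big_nat_cond; apply: eq_bigr => i /andP[/andP[Ai _] _].
by rewrite /P Ai /tx /=; case: (T k i); rewrite ?scale1r ?scale0r.
Qed.

Theorem corollary3p3 (I : set (set nat)) (X : completeNormedModType R)
    (x : nat -> X) :
  is_ideal I -> baire_property (ideal_in_cantor I) ->
  (unconditionally_convergent x <-> ~ meager (A_set I x)).
Proof.
move=> II bp; split.
  move=> uc.
  have cc : CC x.
    apply: contrapT => ncc; have [eps [e0 nc]] := notCC_NC ncc.
    exact: (NC_not_uncond e0 nc uc).
  rewrite (CC_A II cc) => /meagerE mT.
  apply: (@cyl_not_meager (fun _ => false) 0%nat).
  exact: meagerC_sub mT.
move=> nm; apply: CC_uncond; apply: contrapT => ncc.
have [eps [e0 nc]] := notCC_NC ncc.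
apply: nm; apply/meagerE.
exact: (A_meager II (ideal_meager II bp) e0 nc).
Qed.
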